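(* Let $(X,f)$ be a dynamical system and let $\mathcal{F}\subset\mathcal{F}_{inf}$ be a proper translation $+$ invariant Furstenberg family. Then $(X,f)$ is $\mathcal{F}$-transitive if and only if $(X,f)$ is $\nabla(\mathcal{F})$-point transitive.
   Context: A dynamical system is a pair $(X,f)$ with $X$ a compact metric space and $f:X\to X$ continuous. $\mathbb{N}=\{1,2,\dots\}$, $\mathbb{Z}_+=\{0,1,2,\dots\}$. For $U,V\subset X$ and $x\in X$: $N(U,V)=\{n\in\mathbb{N}: U\cap f^{-n}(V)\neq\emptyset\}$ and $N(x,U)=\{n\in\mathbb{N}: f^n(x)\in U\}$. A Furstenberg family is a collection $\mathcal{F}$ of subsets of $\mathbb{N}$ such that $F_1\subset F_2$ and $F_1\in\mathcal{F}$ imply $F_2\in\mathcal{F}$; it is proper if it is neither empty nor the collection of all subsets of $\mathbb{N}$; it is translation $+$ invariant if $F+n\in\mathcal{F}$ for all $F\in\mathcal{F}$ and $n\in\mathbb{Z}_+$, where $F+n=\{k+n:k\in F\}$. $\mathcal{F}_{inf}$ is the family of all infinite subsets of $\mathbb{N}$. $(X,f)$ is $\mathcal{F}$-transitive if $N(U,V)\in\mathcal{F}$ for all non-empty open $U,V\subset X$. A point $x$ is an $\mathcal{F}$-transitive point if $N(x,U)\in\mathcal{F}$ for every non-empty open $U$; $(X,f)$ is $\mathcal{F}$-point transitive if such a point exists. For $F\subset\mathbb{N}$, $F-F=\{a-b: a,b\in F,\ a>b\}$, and $\nabla(\mathcal{F})=\{F\subset\mathbb{N}: F-F\in\mathcal{F}\}$.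 *)

(* Defs.v *)
From Stdlib Require Import Reals List Arith.
Open Scope R_scope.

Section Defs.
Context {X : Type} (d : X -> X -> R).

Definition is_metric : Prop :=
  (forall x y, 0 <= d x y) /\
  (forall x y, d x y = 0 <-> x = y) /\
  (forall x y, d x y = d y x) /\
  (forall x y z, d x z <= d x y + d y z).

Definition open_set (U : X -> Prop) : Prop :=
  forall x, U x -> exists eps, 0 < eps /\ forall y, d x y < eps -> U y.

Definition compact_space : Prop :=
  forall (I : Type) (G : I -> X -> Prop),
    (forall i, open_set (G i)) -> (forall x, exists i, G i x) ->
    exists l : list I, forall x, exists i, In i l /\ G i x.

Definition continuous_map (f : X -> X) : Prop :=
  forall x eps, 0 < eps -> exists delta, 0 < delta /\
    forall y, d x y < delta -> d (f x) (f y) < eps.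

Definition nonempty (U : X -> Prop) : Prop := exists x, U x.
End Defs.

Open Scope nat_scope.

(* Subsets of N = {1,2,...} are predicates on nat not containing 0. *)
Definition subN (A : nat -> Prop) : Prop := ~ A 0.

Definition furstenberg_family (Fam : (nat -> Prop) -> Prop) : Prop :=
  (forall A, Fam A -> subN A) /\
  (forall A B, Fam A -> subN B -> (forall n, A n -> B n) -> Fam B).

Definition proper_family (Fam : (nat -> Prop) -> Prop) : Prop :=
  (exists A, Fam A) /\ (exists A, subN A /\ ~ Fam A).

Definition shift (A : nat -> Prop) (n : nat) : nat -> Prop :=
  fun k => exists a, A a /\ k = a + n.

Definition translation_invariant (Fam : (nat -> Prop) -> Prop) : Prop :=
  forall A n, Fam A -> Fam (shift A n).

Definition infinite_set (A : nat -> Prop) : Prop :=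
  forall m, exists n, m <= n /\ A n.

Definition sub_Finf (Fam : (nat -> Prop) -> Prop) : Prop :=
  forall A, Fam A -> infinite_set A.

Definition hit_UV {X : Type} (f : X -> X) (U V : X -> Prop) : nat -> Prop :=
  fun n => 1 <= n /\ exists x, U x /\ V (Nat.iter n f x).

Definition hit_xU {X : Type} (f : X -> X) (x : X) (U : X -> Prop) : nat -> Prop :=
  fun n => 1 <= n /\ U (Nat.iter n f x).

Definition diffset (A : nat -> Prop) : nat -> Prop :=
  fun n => exists a b, A a /\ A b /\ b < a /\ n = a - b.

Definition nabla (Fam : (nat -> Prop) -> Prop) : (nat -> Prop) -> Prop :=
  fun A => subN A /\ Fam (diffset A).

Definition F_transitive {X : Type} (d : X -> X -> R) (f : X -> X)
  (Fam : (nat -> Prop) -> Prop) : Prop :=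
  forall U V, open_set d U -> open_set d V -> nonempty U -> nonempty V ->
    Fam (hit_UV f U V).

Definition F_transitive_point {X : Type} (d : X -> X -> R) (f : X -> X)
  (Fam : (nat -> Prop) -> Prop) (x : X) : Prop :=
  forall U, open_set d U -> nonempty U -> Fam (hit_xU f x U).

Definition F_point_transitive {X : Type} (d : X -> X -> R) (f : X -> X)
  (Fam : (nat -> Prop) -> Prop) : Prop :=
  exists x, F_transitive_point d f Fam x.

(* Main.v *)
Require Import Defs.
From Stdlib Require Import Reals List Arith Lra Lia Classical ClassicalEpsilon Cantor.
Require Import Defs.

Lemma ball_open {X : Type} (d : X -> X -> R) (c : X) (r : R) : is_metric d ->
  open_set d (fun y => (d c y < r)%R).
Proof.
  intros [H0 [H1 [H2 H3]]] y Hy. exists (r - d c y)%R. split; [lra|].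
  intros z Hz. specialize (H3 c y z). lra.
Qed.

Lemma cont_iter {X} (d : X -> X -> R) f n : continuous_map d f ->
  continuous_map d (Nat.iter n f).
Proof.
  intros Hf. induction n as [|n IH]; intros x eps He.
  - exists eps. simpl. split; auto.
  - destruct (Hf (Nat.iter n f x) eps He) as [d1 [Hd1 Hd1']].
    destruct (IH x d1 Hd1) as [d2 [Hd2 Hd2']].
    exists d2. split; auto. intros y Hy. simpl. apply Hd1'. apply Hd2'. auto.
Qed.

Lemma preimage_open {X} (d : X -> X -> R) g U : continuous_map d g ->
  open_set d U -> open_set d (fun y => U (g y)).
Proof.
  intros Hg HU x Hx. destruct (HU _ Hx) as [e [He He']].
  destruct (Hg x e He) as [dl [Hdl Hdl']]. exists dl. split; auto.
Qed.

Lemma inter_open {X} (d : X -> X -> R) U V : open_set d U -> open_set d V ->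
  open_set d (fun y => U y /\ V y).
Proof.
  intros HU HV x [Hx1 Hx2]. destruct (HU _ Hx1) as [e1 [He1 He1']].
  destruct (HV _ Hx2) as [e2 [He2 He2']]. exists (Rmin e1 e2). split.
  - apply Rmin_glb_lt; auto.
  - intros y Hy. split; [apply He1'|apply He2']; eapply Rlt_le_trans; eauto;
    [apply Rmin_l|apply Rmin_r].
Qed.

Lemma diffset_inf A : infinite_set (diffset A) -> infinite_set A.
Proof.
  intros H m. destruct (H m) as [n [Hn [a [b [Ha [Hb [Hab Hn']]]]]]].
  exists a. split; [lia|auto].
Qed.

Lemma back_dir (X : Type) (d : X -> X -> R) (f : X -> X) Fam :
  continuous_map d f -> furstenberg_family Fam -> translation_invariant Fam ->
  sub_Finf Fam -> F_point_transitive d f (nabla Fam) -> F_transitive d f Fam.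
Proof.
  intros Hf [Hsub Hup] Htr Hinf [x Hx] U V HU HV HUn HVn.
  destruct (Hx U HU HUn) as [_ FU]. destruct (Hx V HV HVn) as [_ FV].
  destruct (Hinf _ FU 0) as [_ [_ [a [b [Ha [Hb [Hab _]]]]]]].
  destruct (Hinf _ FV (S a)) as [n [Hn [a' [b' [Ha' [Hb' [Hab' Hn']]]]]]].
  set (k := a' - a).
  set (W := fun y => U y /\ V (Nat.iter k f y)).
  assert (HW : open_set d W).
  { apply inter_open; auto. apply preimage_open; auto. apply cont_iter; auto. }
  assert (HWn : nonempty W).
  { exists (Nat.iter a f x). split. apply Ha.
    rewrite <- Nat.iter_add. replace (k + a) with a' by lia. apply Ha'. }
  destruct (Hx W HW HWn) as [_ FW].
  apply (Hup _ _ (Htr _ k FW)).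
  - intros [H _]. lia.
  - intros m [p [[q [r [Hq [Hr [Hqr Hp]]]]] Hm]]. split; [lia|].
    exists (Nat.iter r f x). split. apply Hr.
    subst m p. rewrite <- Nat.iter_add.
    replace (q - r + k + r) with (k + q) by lia. rewrite Nat.iter_add. apply Hq.
Qed.

Lemma in_le_max (l : list nat) i : In i l -> (i <= fold_right Nat.max 0 l)%nat.
Proof. induction l as [|a l IHl]; simpl; [tauto|]. intros [H|H]; [subst; lia|]. apply IHl in H; lia. Qed.

Lemma fwd_dir (X : Type) (d : X -> X -> R) (f : X -> X) Fam :
  inhabited X -> is_metric d -> compact_space d -> continuous_map d f ->
  furstenberg_family Fam -> sub_Finf Fam ->
  F_transitive d f Fam -> F_point_transitive d f (nabla Fam).
Proof.
  intros [x0] Hm Hc Hf [Hsub Hup] Hinf Ht.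
  pose proof Hm as [Hd0 [Hd1 [Hd2 Hd3]]].
  assert (Hdd : forall y, d y y = 0%R) by (intro; apply Hd1; auto).
  assert (HL : forall k, exists l : list X, forall y, exists c, In c l /\ (d c y < / INR (S k))%R).
  { intro k. destruct (Hc X (fun c y => (d c y < / INR (S k))%R)) as [l Hl].
    - intro c. apply ball_open; auto.
    - intro y. exists y. rewrite Hdd. apply Rinv_0_lt_compat, lt_0_INR; lia.
    - exists l. exact Hl. }
  pose (L := fun k => proj1_sig (constructive_indefinite_description _ (HL k))).
  assert (HL' : forall k y, exists c, In c (L k) /\ (d c y < / INR (S k))%R)
    by (intro k; unfold L; apply (proj2_sig (constructive_indefinite_description _ (HL k)))).
  clearbody L. clear HL.
  pose (cen := fun j => nth (snd (of_nat j)) (L (fst (of_nat j))) x0).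
  pose (rad := fun j => (/ INR (S (fst (of_nat j))))%R).
  assert (Hrad : forall j, (0 < rad j)%R)
    by (intro; apply Rinv_0_lt_compat, lt_0_INR; lia).
  assert (Hbase : forall U, open_set d U -> nonempty U ->
            exists j, forall z, (d (cen j) z < rad j)%R -> U z).
  { intros U HU [y Hy]. destruct (HU y Hy) as [e [He He']].
    destruct (archimed_cor1 (e/2) ltac:(lra)) as [N [HN HN0]].
    destruct (HL' N y) as [c [Hcin Hcy]].
    destruct (In_nth _ _ x0 Hcin) as [i [_ Hi]].
    exists (to_nat (N, i)). unfold cen, rad. rewrite cancel_of_to. cbn [fst snd]. rewrite Hi.
    intros z Hz. apply He'.
    assert (/ INR (S N) < / INR N)%R.
    { apply Rinv_lt_contravar. apply Rmult_lt_0_compat; apply lt_0_INR; try lia.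
      rewrite S_INR; lra. }
    specialize (Hd3 y c z). rewrite (Hd2 y c) in Hd3. lra. }
  set (P := fun (j : nat) (p q : X * R) => (0 < snd p)%R ->
     (0 < snd q)%R /\ exists n, (1 <= n)%nat /\ forall y, (d (fst q) y <= snd q)%R ->
        (d (fst p) y < snd p)%R /\ (d (cen j) (Nat.iter n f y) < rad j)%R).
  assert (Hst : forall j p, exists q, P j p q).
  { intros j [z r]. destruct (Rlt_dec 0 r) as [Hr|Hr];
      [|exists (z, r); intro H; simpl in H; lra].
    assert (HW : nonempty (fun y => (d z y < r)%R)) by (exists z; rewrite Hdd; auto).
    assert (HB : nonempty (fun y => (d (cen j) y < rad j)%R)) by (exists (cen j); rewrite Hdd; auto).
    destruct (Hinf _ (Ht _ _ (ball_open d z r Hm) (ball_open d (cen j) (rad j) Hm) HW HB) 0%nat)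
      as [n [_ [Hn [y0 [Hy1 Hy2]]]]].
    destruct (cont_iter d f n Hf y0 (rad j - d (cen j) (Nat.iter n f y0))%R ltac:(lra))
        as [dl [Hdl Hdl']].
      pose (e1 := (r - d z y0)%R).
      exists (y0, (Rmin e1 dl / 2)%R). intros _. simpl.
      assert (0 < Rmin e1 dl)%R by (apply Rmin_glb_lt; unfold e1; lra).
      split; [lra|]. exists n. split; [lia|]. intros y Hy.
      pose proof (Rmin_l e1 dl). pose proof (Rmin_r e1 dl).
      split.
      + specialize (Hd3 z y0 y). unfold e1 in *. lra.
      + specialize (Hdl' y ltac:(lra)).
        specialize (Hd3 (cen j) (Nat.iter n f y0) (Nat.iter n f y)). lra. }
  pose (g := fun j p => proj1_sig (constructive_indefinite_description _ (Hst j p))).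
  assert (Hg : forall j p, P j p (g j p))
    by (intros j p; unfold g; apply (proj2_sig (constructive_indefinite_description _ (Hst j p)))).
  clearbody g. clear Hst.
  pose (s := fix s (j : nat) : X * R := match j with O => (x0, 1%R) | S j => g j (s j) end).
  assert (Hpos : forall j, (0 < snd (s j))%R).
  { induction j; simpl; [lra|]. apply (Hg j (s j) IHj). }
  set (C := fun j y => (d (fst (s j)) y <= snd (s j))%R).
  assert (Hmono1 : forall j y, C (S j) y -> C j y).
  { intros j y Hy. destruct (Hg j (s j) (Hpos j)) as [_ [n [_ Hn]]].
    destruct (Hn y Hy). unfold C. lra. }
  assert (Hmono : forall i j y, (i <= j)%nat -> C j y -> C i y).
  { intros i j y Hij. induction Hij; auto. }
  assert (Hx : exists x, forall j, C j x).
  { apply NNPP. intro Hno.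
    destruct (Hc nat (fun j y => (snd (s j) < d (fst (s j)) y)%R)) as [l Hl].
    - intros j y Hy. exists (d (fst (s j)) y - snd (s j))%R. split; [lra|].
      intros w Hw. specialize (Hd3 (fst (s j)) w y). rewrite (Hd2 w y) in Hd3. lra.
    - intro y. apply NNPP. intro H. apply Hno. exists y. intro j.
      unfold C. apply Rnot_lt_le. intro H'. apply H. exists j. auto.
    - set (J := fold_right Nat.max 0%nat l).
      destruct (Hl (fst (s J))) as [i [Hi Hi']].
      assert (C J (fst (s J))) by (unfold C; rewrite Hdd; pose proof (Hpos J); lra).
      apply (Hmono i J) in H; [|apply in_le_max; auto]. unfold C in H. lra. }
  destruct Hx as [x Hx]. exists x. intros U HU HUn. split.
  { intros [H _]. lia. }
  apply (Hup _ _ (Ht U U HU HU HUn HUn)).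
  { intros [a [b [_ [_ [Hab H0]]]]]. lia. }
  intros k [Hk [y [Hy1 Hy2]]].
  destruct (Hbase (fun w => U w /\ U (Nat.iter k f w))) as [j Hj].
  { apply inter_open; auto. apply preimage_open; auto. apply cont_iter; auto. }
  { exists y. auto. }
  destruct (Hg j (s j) (Hpos j)) as [_ [n [Hn1 Hn]]].
  destruct (Hn x (Hx (S j))) as [_ Hn2].
  destruct (Hj _ Hn2) as [Hw1 Hw2].
  exists (k + n)%nat, n. split; [|split; [|split]]; try lia.
  - split; [lia|]. rewrite Nat.iter_add. auto.
  - split; auto.
Qed.

Theorem proposition3p6 (X : Type) (d : X -> X -> R) (f : X -> X)
  (Fam : (nat -> Prop) -> Prop) :
  inhabited X -> is_metric d -> compact_space d -> continuous_map d f ->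
  furstenberg_family Fam -> proper_family Fam -> translation_invariant Fam ->
  sub_Finf Fam ->
  (F_transitive d f Fam <-> F_point_transitive d f (nabla Fam)).
Proof.
  intros Hi Hm Hc Hf HF _ Ht Hinf. split.
  - apply fwd_dir; auto.
  - apply back_dir; auto.
Qed.
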